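(* Let $V:P\to B(\mathcal{H})$ be an isometric representation with commuting range projections. Then: (1) for every $g\in G$ the operator $W_g:=V_b^*V_a$, where $g=ab^{-1}$ with $a,b\in P$, does not depend on the choice of $a,b$, and it is a partial isometry; (2) the projections $E_g:=W_gW_g^*$, $g\in G$, pairwise commute; (3) if $g_1,g_2\in G$ satisfy $g_1g_2^{-1}\in P$, then $E_{g_1}\le E_{g_2}$; (4) the map $G\ni g\mapsto W_g\in B(\mathcal{H})$ is strongly continuous; (5) for all $g,h\in G$, $W_gW_h=E_gW_{hg}$.
   Context: Standing assumptions: $G$ is a second countable locally compact group with left Haar measure $dg$ and modular function $\Delta$; $P\subset G$ is a closed subsemigroup with identity $e\in P$, such that $G=PP^{-1}$ and the interior $Int(P)$ of $P$ is dense in $P$. An isometric representation with commuting range projections is a map $V:P\to B(\mathcal{H})$ ($\mathcal{H}$ a Hilbert space) such that $a\mapsto V_a$ and $a\mapsto V_a^*$ are strongly continuous, each $V_a$ is an isometry, $V_aV_b=V_{ba}$ for $a,b\in P$, and the projections $E_a:=V_aV_a^*$ ($a\in P$) pairwise commute. *)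

(* Defs.v *)
From Stdlib Require Import Reals ClassicalEpsilon List.
Open Scope R_scope.

Record C := Cmk { Cre : R ; Cim : R }.
Definition C0 : C := Cmk 0 0.
Definition C1 : C := Cmk 1 0.
Definition Cadd (z w : C) : C := Cmk (Cre z + Cre w) (Cim z + Cim w).
Definition Cmul (z w : C) : C :=
  Cmk (Cre z * Cre w - Cim z * Cim w) (Cre z * Cim w + Cim z * Cre w).
Definition Cconj (z : C) : C := Cmk (Cre z) (- Cim z).

Record Hilbert := {
  hcar :> Type;
  h0 : hcar;
  hadd : hcar -> hcar -> hcar;
  hopp : hcar -> hcar;
  hscal : C -> hcar -> hcar;
  hinner : hcar -> hcar -> C;
  hadd_assoc : forall x y z, hadd x (hadd y z) = hadd (hadd x y) z;
  hadd_comm : forall x y, hadd x y = hadd y x;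
  hadd_0 : forall x, hadd h0 x = x;
  hadd_opp : forall x, hadd x (hopp x) = h0;
  hscal_1 : forall x, hscal C1 x = x;
  hscal_mul : forall a b x, hscal (Cmul a b) x = hscal a (hscal b x);
  hscal_addv : forall a x y, hscal a (hadd x y) = hadd (hscal a x) (hscal a y);
  hscal_adds : forall a b x, hscal (Cadd a b) x = hadd (hscal a x) (hscal b x);
  hinner_add : forall x y z, hinner (hadd x y) z = Cadd (hinner x z) (hinner y z);
  hinner_scal : forall a x y, hinner (hscal a x) y = Cmul a (hinner x y);
  hinner_conj : forall x y, hinner y x = Cconj (hinner x y);
  hinner_pos : forall x, 0 <= Cre (hinner x x);
  hinner_def : forall x, hinner x x = C0 -> x = h0;
  hcomplete : forall u : nat -> hcar,
    (forall eps, 0 < eps -> exists N, forall m n, (N <= m)%nat -> (N <= n)%nat ->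
       sqrt (Cre (hinner (hadd (u m) (hopp (u n))) (hadd (u m) (hopp (u n))))) < eps) ->
    exists l, forall eps, 0 < eps -> exists N, forall n, (N <= n)%nat ->
       sqrt (Cre (hinner (hadd (u n) (hopp l)) (hadd (u n) (hopp l)))) < eps
}.
Arguments h0 {_}.
Arguments hadd {_} _ _.
Arguments hopp {_} _.
Arguments hscal {_} _ _.
Arguments hinner {_} _ _.

Definition hsub {H : Hilbert} (x y : H) : H := hadd x (hopp y).
Definition hnorm {H : Hilbert} (x : H) : R := sqrt (Cre (hinner x x)).

Definition ocomp {H : Hilbert} (S T : H -> H) : H -> H := fun x => S (T x).

Definition is_bounded_linear {H : Hilbert} (T : H -> H) : Prop :=
  (forall x y, T (hadd x y) = hadd (T x) (T y)) /\
  (forall a x, T (hscal a x) = hscal a (T x)) /\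
  (exists M, forall x, hnorm (T x) <= M * hnorm x).

Definition is_adjoint {H : Hilbert} (T S : H -> H) : Prop :=
  forall x y, hinner (T x) y = hinner x (S y).

Definition adj {H : Hilbert} (T : H -> H) : H -> H :=
  epsilon (inhabits (fun x : H => x)) (fun S => is_adjoint T S).

Definition is_isometry {H : Hilbert} (T : H -> H) : Prop :=
  is_bounded_linear T /\ forall x, hnorm (T x) = hnorm x.

Definition is_partial_isometry {H : Hilbert} (T : H -> H) : Prop :=
  is_bounded_linear T /\
  forall x, (forall y, T y = h0 -> hinner x y = C0) -> hnorm (T x) = hnorm x.

Definition op_le {H : Hilbert} (S T : H -> H) : Prop :=
  forall x, Cre (hinner (S x) x) <= Cre (hinner (T x) x).

Definition is_compact {T : Type} (opn : (T -> Prop) -> Prop) (K : T -> Prop) : Prop :=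
  forall F : (T -> Prop) -> Prop,
    (forall U, F U -> opn U) ->
    (forall x, K x -> exists U, F U /\ U x) ->
    exists l : list (T -> Prop),
      (forall U, In U l -> F U) /\ (forall x, K x -> exists U, In U l /\ U x).

Record LCGroup := {
  gcar :> Type;
  gmul : gcar -> gcar -> gcar;
  ginv : gcar -> gcar;
  gone : gcar;
  gmul_assoc : forall x y z, gmul x (gmul y z) = gmul (gmul x y) z;
  gmul_1l : forall x, gmul gone x = x;
  gmul_1r : forall x, gmul x gone = x;
  gmul_Vl : forall x, gmul (ginv x) x = gone;
  gmul_Vr : forall x, gmul x (ginv x) = gone;
  gopen : (gcar -> Prop) -> Prop;
  gopen_full : gopen (fun _ => True);
  gopen_inter : forall U W, gopen U -> gopen W -> gopen (fun x => U x /\ W x);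
  gopen_union : forall F : (gcar -> Prop) -> Prop,
      (forall U, F U -> gopen U) -> gopen (fun x => exists U, F U /\ U x);
  gmul_cont : forall U x y, gopen U -> U (gmul x y) ->
      exists A B, gopen A /\ gopen B /\ A x /\ B y /\
                  forall a b, A a -> B b -> U (gmul a b);
  ginv_cont : forall U x, gopen U -> U (ginv x) ->
      exists A, gopen A /\ A x /\ forall a, A a -> U (ginv a);
  ghausdorff : forall x y, x <> y -> exists A B, gopen A /\ gopen B /\ A x /\ B y /\
      forall z, A z -> B z -> False;
  glocally_compact : forall x, exists U K, gopen U /\ U x /\ is_compact gopen K /\
      forall z, U z -> K z;
  gsecond_countable : exists B : nat -> gcar -> Prop, (forall n, gopen (B n)) /\
      forall U x, gopen U -> U x -> exists n, B n x /\ forall z, B n z -> U z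
}.
Arguments gmul {_} _ _.
Arguments ginv {_} _.
Arguments gone {_}.
Arguments gopen {_} _.

Definition interior {G : LCGroup} (P : G -> Prop) (x : G) : Prop :=
  exists O, gopen O /\ O x /\ forall z, O z -> P z.

Definition standing_assumptions (G : LCGroup) (P : G -> Prop) : Prop :=
  gopen (fun x => ~ P x) /\
  P gone /\
  (forall a b, P a -> P b -> P (gmul a b)) /\
  (forall g, exists a b, P a /\ P b /\ g = gmul a (ginv b)) /\
  (forall x, P x -> forall U, gopen U -> U x ->
     exists y, U y /\ interior P y).

Definition strongly_continuous_on {G : LCGroup} {H : Hilbert}
  (D : G -> Prop) (F : G -> H -> H) : Prop :=
  forall (x : H) g, D g -> forall eps, 0 < eps ->
    exists U, gopen U /\ U g /\
      forall h, D h -> U h -> hnorm (hsub (F h x) (F g x)) < eps.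

Definition rangeproj {H : Hilbert} (T : H -> H) : H -> H := ocomp T (adj T).

(* isometric representation with commuting range projections; V is only
   meaningful on P, its values outside P are irrelevant *)
Definition isom_rep_crp {G : LCGroup} {H : Hilbert} (P : G -> Prop)
  (V : G -> H -> H) : Prop :=
  strongly_continuous_on P V /\
  strongly_continuous_on P (fun a => adj (V a)) /\
  (forall a, P a -> is_isometry (V a)) /\
  (forall a b, P a -> P b -> ocomp (V a) (V b) = V (gmul b a)) /\
  (forall a b, P a -> P b ->
     ocomp (rangeproj (V a)) (rangeproj (V b)) = ocomp (rangeproj (V b)) (rangeproj (V a))).

Definition Wop {G : LCGroup} {H : Hilbert} (P : G -> Prop) (V : G -> H -> H)
  (g : G) : H -> H :=
  let ab := epsilon (inhabits (@gone G, @gone G))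
              (fun ab => P (fst ab) /\ P (snd ab) /\ g = gmul (fst ab) (ginv (snd ab))) in
  ocomp (adj (V (snd ab))) (V (fst ab)).

Definition Eop {G : LCGroup} {H : Hilbert} (P : G -> Prop) (V : G -> H -> H)
  (g : G) : H -> H := rangeproj (Wop P V g).

(* Main.v *)
Require Import Defs.
From Stdlib Require Import Reals.
From Stdlib Require Import Lra Psatz ClassicalEpsilon FunctionalExtensionality Classical.
Import Defs.
Open Scope R_scope.
Arguments hadd_assoc {_} _ _ _.
Arguments hadd_comm {_} _ _.
Arguments hadd_0 {_} _.
Arguments hadd_opp {_} _.
Arguments hscal_1 {_} _.
Arguments hscal_mul {_} _ _ _.
Arguments hscal_addv {_} _ _ _.
Arguments hscal_adds {_} _ _ _.
Arguments hinner_add {_} _ _ _.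
Arguments hinner_scal {_} _ _ _.
Arguments hinner_conj {_} _ _.
Arguments hinner_pos {_} _.
Arguments hinner_def {_} _ _.

Lemma C_ext (z w : C) : Cre z = Cre w -> Cim z = Cim w -> z = w.
Proof. destruct z, w; simpl; intros; subst; reflexivity. Qed.

Ltac csolve := apply C_ext; simpl; ring.

Lemma hadd_0r {H : Hilbert} (x : H) : hadd x h0 = x.
Proof. rewrite hadd_comm; apply hadd_0. Qed.

Lemma hadd_oppl {H : Hilbert} (x : H) : hadd (hopp x) x = h0.
Proof. rewrite hadd_comm; apply hadd_opp. Qed.

Lemma hadd_cancel_0 {H : Hilbert} (a b : H) : hadd a b = b -> a = h0.
Proof.
  intro E. transitivity (hadd (hadd a b) (hopp b)).
  - rewrite <- hadd_assoc, hadd_opp. symmetry; apply hadd_0r.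
  - rewrite E. apply hadd_opp.
Qed.

Lemma hadd_eq_opp {H : Hilbert} (u x : H) : hadd u x = h0 -> u = hopp x.
Proof.
  intro E. transitivity (hadd (hadd u x) (hopp x)).
  - rewrite <- hadd_assoc, hadd_opp. symmetry; apply hadd_0r.
  - rewrite E. apply hadd_0.
Qed.

Lemma hsub_eq0 {H : Hilbert} (x y : H) : hadd x (hopp y) = h0 -> x = y.
Proof.
  intro E. transitivity (hadd (hadd x (hopp y)) y).
  - rewrite <- hadd_assoc, hadd_oppl. symmetry; apply hadd_0r.
  - rewrite E. apply hadd_0.
Qed.

Lemma hscal_0 {H : Hilbert} (x : H) : hscal C0 x = h0.
Proof.
  apply (hadd_cancel_0 _ (hscal C0 x)). rewrite <- hscal_adds. f_equal. csolve.
Qed.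

Lemma hopp_scal {H : Hilbert} (x : H) : hopp x = hscal (Cmk (-1) 0) x.
Proof.
  symmetry. apply hadd_eq_opp. rewrite <- (hscal_1 x) at 2. rewrite <- hscal_adds.
  replace (Cadd (Cmk (-1) 0) C1) with C0 by csolve. apply hscal_0.
Qed.

Lemma hinner_0l {H : Hilbert} (y : H) : hinner h0 y = C0.
Proof. rewrite <- (hscal_0 h0), hinner_scal. csolve. Qed.

Lemma hinner_add_r {H : Hilbert} (x y z : H) :
  hinner x (hadd y z) = Cadd (hinner x y) (hinner x z).
Proof.
  rewrite (hinner_conj (hadd y z) x), hinner_add, (hinner_conj y x), (hinner_conj z x).
  csolve.
Qed.

Lemma hinner_scal_r {H : Hilbert} (a : C) (x y : H) :
  hinner x (hscal a y) = Cmul (Cconj a) (hinner x y).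
Proof.
  rewrite (hinner_conj (hscal a y) x), hinner_scal, (hinner_conj y x). csolve.
Qed.

Lemma hext {H : Hilbert} (x y : H) : (forall z, hinner x z = hinner y z) -> x = y.
Proof.
  intro E. apply hsub_eq0. apply hinner_def.
  rewrite hinner_add, hopp_scal, hinner_scal, !E. csolve.
Qed.

Lemma hext_r {H : Hilbert} (x y : H) : (forall z, hinner z x = hinner z y) -> x = y.
Proof.
  intro E. apply hext. intro z. rewrite (hinner_conj z x), (hinner_conj z y), E. reflexivity.
Qed.

Ltac vecsolve := apply hext; intro; rewrite ?hopp_scal;
  repeat (rewrite ?hinner_add, ?hinner_scal, ?hinner_0l); apply C_ext; simpl; field.

Definition Nsq {H : Hilbert} (x : H) : R := Cre (hinner x x).

Lemma Nsq_pos {H : Hilbert} (x : H) : 0 <= Nsq x.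
Proof. apply hinner_pos. Qed.

Lemma Cre_conj_self {H : Hilbert} (x y : H) : Cre (hinner y x) = Cre (hinner x y).
Proof. rewrite hinner_conj. reflexivity. Qed.

Lemma Nsq_add {H : Hilbert} (x y : H) :
  Nsq (hadd x y) = Nsq x + Nsq y + 2 * Cre (hinner x y).
Proof.
  unfold Nsq. rewrite hinner_add, !hinner_add_r. simpl.
  rewrite (Cre_conj_self x y). ring.
Qed.

Lemma Nsq_scal {H : Hilbert} (t : R) (x : H) : Nsq (hscal (Cmk t 0) x) = t * t * Nsq x.
Proof.
  unfold Nsq. rewrite hinner_scal, hinner_scal_r. simpl. ring.
Qed.

Lemma Cre_scal_r {H : Hilbert} (t : R) (x y : H) :
  Cre (hinner x (hscal (Cmk t 0) y)) = t * Cre (hinner x y).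
Proof. rewrite hinner_scal_r. simpl. ring. Qed.

Lemma discr (a b c : R) : 0 <= a -> 0 <= c -> (forall t, 0 <= a + 2 * b * t + c * t * t) ->
  b * b <= a * c.
Proof.
  intros Ha Hc Ht.
  destruct (Rle_lt_or_eq_dec 0 c Hc) as [Hc'|Hc'].
  - specialize (Ht (- b / c)).
    assert (Q1 : 0 <= a - b * b / c) by (replace (a - b*b/c) with (a + 2 * b * (- b / c) + c * (- b / c) * (- b / c)) by (field; lra); lra).
    assert (Q2 : 0 <= (a - b * b / c) * c) by nra.
    replace ((a - b * b / c) * c) with (a * c - b * b) in Q2 by (field; lra). lra.
  - subst c. destruct (Req_dec b 0) as [->|Hb]; [lra|].
    specialize (Ht (- (a + 1) / (2 * b))).
    replace (a + 2 * b * (- (a + 1) / (2 * b)) + 0 * (- (a + 1) / (2 * b)) * (- (a + 1) / (2 * b)))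
      with (-1) in Ht by (field; lra). lra.
Qed.

Lemma reCS {H : Hilbert} (x y : H) : Cre (hinner x y) * Cre (hinner x y) <= Nsq x * Nsq y.
Proof.
  apply discr; try apply Nsq_pos. intro t.
  pose proof (Nsq_pos (hadd x (hscal (Cmk t 0) y))) as P.
  rewrite Nsq_add, Nsq_scal, Cre_scal_r in P. lra.
Qed.

Lemma reCS_abs {H : Hilbert} (x y : H) : Cre (hinner x y) <= sqrt (Nsq x) * sqrt (Nsq y).
Proof.
  rewrite <- sqrt_mult by apply Nsq_pos.
  destruct (Rle_or_lt (Cre (hinner x y)) 0). { pose proof (sqrt_pos (Nsq x * Nsq y)). lra. }
  rewrite <- (sqrt_square (Cre (hinner x y))) by lra. apply sqrt_le_1_alt. apply reCS.
Qed.

Lemma bl_add {H : Hilbert} (T : H -> H) : is_bounded_linear T -> forall x y, T (hadd x y) = hadd (T x) (T y).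
Proof. intros [A _]; exact A. Qed.
Lemma bl_scal {H : Hilbert} (T : H -> H) : is_bounded_linear T -> forall a x, T (hscal a x) = hscal a (T x).
Proof. intros [_ [A _]]; exact A. Qed.
Lemma bl_opp {H : Hilbert} (T : H -> H) : is_bounded_linear T -> forall x, T (hopp x) = hopp (T x).
Proof. intros L x. rewrite !hopp_scal. apply (bl_scal T L). Qed.

Lemma iso_Nsq {H : Hilbert} (T : H -> H) : is_isometry T -> forall x, Nsq (T x) = Nsq x.
Proof.
  intros [_ N] x. specialize (N x). unfold hnorm in N.
  apply sqrt_inj; try apply Nsq_pos. exact N.
Qed.

Lemma iso_inner {H : Hilbert} (T : H -> H) : is_isometry T -> forall x y, hinner (T x) (T y) = hinner x y.
Proof.
  intros I x y. pose proof I as [L N].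
  assert (Hre : forall x y, Cre (hinner (T x) (T y)) = Cre (hinner x y)).
  { intros a b. pose proof (iso_Nsq T I (hadd a b)) as E.
    rewrite (bl_add T L), !Nsq_add, !(iso_Nsq T I) in E. lra. }
  apply C_ext. apply Hre.
  pose proof (Hre x (hscal (Cmk 0 1) y)) as E.
  rewrite (bl_scal T L), !hinner_scal_r in E. simpl in E. lra.
Qed.

Lemma adj_unique {H : Hilbert} (T S1 S2 : H -> H) : is_adjoint T S1 -> is_adjoint T S2 -> S1 = S2.
Proof.
  intros A1 A2. apply functional_extensionality. intro y. apply hext_r. intro x.
  rewrite <- A1, <- A2. reflexivity.
Qed.

Lemma adj_char {H : Hilbert} (T S : H -> H) : is_adjoint T S -> adj T = S.
Proof.
  intro A. unfold adj. apply (adj_unique T).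
  - apply epsilon_spec. exists S; exact A.
  - exact A.
Qed.

Lemma adj_add {H : Hilbert} (T S : H -> H) : is_adjoint T S -> forall x y, S (hadd x y) = hadd (S x) (S y).
Proof.
  intros A x y. apply hext_r. intro w. rewrite <- A, !hinner_add_r, <- !A. reflexivity.
Qed.
Lemma adj_scal {H : Hilbert} (T S : H -> H) : is_adjoint T S -> forall a x, S (hscal a x) = hscal a (S x).
Proof.
  intros A a x. apply hext_r. intro w. rewrite <- A, !hinner_scal_r, <- !A. reflexivity.
Qed.
Lemma adj_opp {H : Hilbert} (T S : H -> H) : is_adjoint T S -> forall x, S (hopp x) = hopp (S x).
Proof. intros A x. rewrite !hopp_scal. apply (adj_scal T S A). Qed.

Lemma adj_sym {H : Hilbert} (T S : H -> H) : is_adjoint T S -> is_adjoint S T.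
Proof.
  intros A x y. rewrite (hinner_conj y (S x)), <- A, <- hinner_conj. reflexivity.
Qed.

Lemma adj_comp {H : Hilbert} (A SA B SB : H -> H) : is_adjoint A SA -> is_adjoint B SB ->
  is_adjoint (ocomp A B) (ocomp SB SA).
Proof. intros HA HB x y. unfold ocomp. rewrite HA, HB. reflexivity. Qed.

Lemma Nsq_opp_form {H : Hilbert} (p q : H) :
  Nsq (hadd p (hopp q)) = Nsq p + Nsq q - 2 * Cre (hinner p q).
Proof.
  rewrite hopp_scal, Nsq_add, Nsq_scal, Cre_scal_r. ring.
Qed.

Lemma parallelogram {H : Hilbert} (p q : H) :
  Nsq (hadd p q) + Nsq (hadd p (hopp q)) = 2 * Nsq p + 2 * Nsq q.
Proof. rewrite Nsq_opp_form, Nsq_add. ring. Qed.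

Lemma eps_small (e : R) : 0 < e -> exists N, forall n, (N <= n)%nat -> / (INR n + 1) < e.
Proof.
  intro He. destruct (INR_unbounded (/ e)) as [N HN]. exists N. intros n Hn.
  apply le_INR in Hn. pose proof (pos_INR N).
  rewrite <- (Rinv_inv e). apply Rinv_lt_contravar.
  - apply Rmult_lt_0_compat; [apply Rinv_0_lt_compat; lra| lra].
  - lra.
Qed.

Lemma proj_exists {H : Hilbert} (T : H -> H) : is_isometry T ->
  forall y, exists x, forall w, hinner (T w) y = hinner w x.
Proof.
  intros I y. pose proof I as [L N0].
  pose proof (bl_add T L) as TA. pose proof (bl_scal T L) as TS. pose proof (bl_opp T L) as TO.
  pose proof (iso_Nsq T I) as TN.
  set (E := fun r => exists u, r = - Nsq (hadd y (hopp (T u)))).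
  assert (Hb : bound E).
  { exists 0. intros r [u ->]. pose proof (Nsq_pos (hadd y (hopp (T u)))). lra. }
  assert (Hne : exists r, E r) by (exists (- Nsq (hadd y (hopp (T h0)))); exists h0; reflexivity).
  destruct (completeness E Hb Hne) as [m [Hub Hlub]].
  set (D := - m).
  assert (HD1 : forall u, D <= Nsq (hadd y (hopp (T u)))).
  { intro u. assert (E (- Nsq (hadd y (hopp (T u))))) by (exists u; reflexivity).
    specialize (Hub _ H0). unfold D. lra. }
  assert (HD0 : 0 <= D) by (pose proof (HD1 h0); pose proof (Nsq_pos (hadd y (hopp (T h0)))); 
    assert (m <= 0) by (apply Hlub; intros r [u ->]; pose proof (Nsq_pos (hadd y (hopp (T u)))); lra); unfold D; lra).
  assert (HD2 : forall e, 0 < e -> exists u, Nsq (hadd y (hopp (T u))) < D + e).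
  { intros e He. apply NNPP. intro Hn.
    assert (m <= m - e).
    { apply Hlub. intros r [u ->]. destruct (Rlt_or_le (Nsq (hadd y (hopp (T u)))) (D + e)).
      - exfalso; apply Hn; exists u; exact H0.
      - unfold D in H0. lra. }
    lra. }
  set (ep := fun n : nat => / (INR n + 1)).
  assert (Hep : forall n, 0 < ep n) by (intro n; unfold ep; apply Rinv_0_lt_compat; pose proof (pos_INR n); lra).
  assert (Hepm : forall n k, (n <= k)%nat -> ep k <= ep n).
  { intros n k Hnk. unfold ep. apply Rinv_le_contravar. pose proof (pos_INR n); lra.
    apply le_INR in Hnk. lra. }
  set (u := fun n => proj1_sig (constructive_indefinite_description _ (HD2 (ep n) (Hep n)))).
  assert (Hu : forall n, Nsq (hadd y (hopp (T (u n)))) < D + ep n).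
  { intro n. unfold u. destruct (constructive_indefinite_description _ _) as [v Hv]. simpl. exact Hv. }
  assert (Hc : forall n k, Nsq (hadd (u k) (hopp (u n))) <= 2 * ep n + 2 * ep k).
  { intros n k.
    pose proof (parallelogram (hadd y (hopp (T (u n)))) (hadd y (hopp (T (u k))))) as Pl.
    assert (E1 : hadd (hadd y (hopp (T (u n)))) (hopp (hadd y (hopp (T (u k)))))
                 = T (hadd (u k) (hopp (u n)))).
    { rewrite TA, TO. vecsolve. }
    set (mid := hscal (Cmk (/2) 0) (hadd (u n) (u k))).
    assert (E2 : hadd (hadd y (hopp (T (u n)))) (hadd y (hopp (T (u k))))
                 = hscal (Cmk 2 0) (hadd y (hopp (T mid)))).
    { unfold mid. rewrite TS, TA. vecsolve. }
    rewrite E1, E2, TN, Nsq_scal in Pl. pose proof (HD1 mid). pose proof (Hu n). pose proof (Hu k).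
    lra. }
  assert (Hcauchy : forall e, 0 < e -> exists N, forall m n, (N <= m)%nat -> (N <= n)%nat ->
       sqrt (Cre (hinner (hadd (u m) (hopp (u n))) (hadd (u m) (hopp (u n))))) < e).
  { intros e He. destruct (eps_small (e * e / 4)) as [N HN]. nra.
    exists N. intros a b Ha Hb'. 
    pose proof (Hc b a). pose proof (HN a Ha). pose proof (HN b Hb').
    change (Cre (hinner (hadd (u a) (hopp (u b))) (hadd (u a) (hopp (u b))))) with (Nsq (hadd (u a) (hopp (u b)))).
    rewrite <- (sqrt_square e) by lra. apply sqrt_lt_1_alt. split. apply Nsq_pos.
    unfold ep in *. lra. }
  destruct (hcomplete H u Hcauchy) as [l Hl].
  set (z := hadd y (hopp (T l))).
  assert (Hz : Nsq z <= D).
  { apply Rnot_lt_le. intro Hlt. set (gap := Nsq z - D).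
    set (K := sqrt (D + 1)).
    assert (HK : 0 <= K) by apply sqrt_pos.
    set (dl := Rmin 1 (gap / (4 * (1 + 2 * K)))).
    assert (Hdl : 0 < dl). { unfold dl. apply Rmin_pos. lra. apply Rdiv_lt_0_compat; unfold gap; lra. }
    assert (Hdl2 : dl * (1 + 2 * K) <= gap / 4).
    { unfold dl. apply Rle_trans with (gap / (4 * (1 + 2 * K)) * (1 + 2 * K)).
      apply Rmult_le_compat_r. lra. apply Rmin_r. right. field. lra. }
    assert (Hdl1 : dl <= 1) by apply Rmin_l.
    destruct (Hl dl Hdl) as [N1 HN1].
    destruct (eps_small (Rmin 1 (gap / 4))) as [N2 HN2].
    { apply Rmin_pos. lra. unfold gap; lra. }
    set (n := Nat.max N1 N2).
    specialize (HN1 n (Nat.le_max_l _ _)). specialize (HN2 n (Nat.le_max_r _ _)).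
    pose proof (Rmin_l 1 (gap / 4)). pose proof (Rmin_r 1 (gap / 4)).
    set (p := hadd y (hopp (T (u n)))). set (q := T (hadd (u n) (hopp l))).
    assert (Ez : z = hadd p q) by (unfold z, p, q; rewrite TA, TO; vecsolve).
    pose proof (Hu n) as Hp. fold p in Hp.
    assert (Hq : Nsq q = Nsq (hadd (u n) (hopp l))) by (unfold q; apply TN).
    change (Cre (hinner (hadd (u n) (hopp l)) (hadd (u n) (hopp l)))) with (Nsq (hadd (u n) (hopp l))) in HN1.
    pose proof (reCS_abs p q) as CS.
    rewrite Ez, Nsq_add in Hlt. unfold gap in *. rewrite Ez, Nsq_add in *.
    assert (Sp : sqrt (Nsq p) <= K).
    { unfold K. apply sqrt_le_1_alt. unfold ep in *. lra. }
    pose proof (sqrt_pos (Nsq p)). pose proof (sqrt_pos (Nsq q)).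
    assert (Sq : sqrt (Nsq q) < dl) by (rewrite Hq; exact HN1).
    pose proof (sqrt_sqrt (Nsq q) (Nsq_pos q)).
    unfold ep in Hp.
    assert (sqrt (Nsq p) * sqrt (Nsq q) <= K * dl) by (apply Rmult_le_compat; lra).
    assert (Nsq q <= dl) by nra.
    nra. }
  assert (Hre : forall w, Cre (hinner z (T w)) = 0).
  { intro w. set (c := Cre (hinner z (T w))).
    assert (c * c <= 0 * Nsq (T w)).
    { apply discr. lra. apply Nsq_pos. intro s.
      pose proof (HD1 (hadd l (hscal (Cmk (- s) 0) w))) as Hs.
      assert (Es : hadd y (hopp (T (hadd l (hscal (Cmk (- s) 0) w))))
                  = hadd z (hscal (Cmk s 0) (T w))) by (unfold z; rewrite TA, TS; vecsolve).
      rewrite Es, Nsq_add, Nsq_scal, Cre_scal_r in Hs. fold c in Hs. lra. }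
    nra. }
  assert (Hz0 : forall w, hinner (T w) z = C0).
  { intro w. rewrite hinner_conj. 
    assert (hinner z (T w) = C0).
    { apply C_ext. apply Hre. pose proof (Hre (hscal (Cmk 0 1) w)) as E3.
      rewrite TS, hinner_scal_r in E3. simpl in E3. simpl. lra. }
    rewrite H0. apply C_ext; simpl; lra. }
  exists l. intro w.
  assert (Ey : y = hadd (T l) z) by (unfold z; vecsolve).
  rewrite Ey, hinner_add_r, Hz0, (iso_inner T I). apply C_ext; simpl; lra.
Qed.

Lemma iso_adj {H : Hilbert} (T : H -> H) : is_isometry T -> is_adjoint T (adj T).
Proof.
  intro I. pose proof (proj_exists T I) as PE.
  set (S := fun y => proj1_sig (constructive_indefinite_description _ (PE y))).
  assert (AS : is_adjoint T S).
  { intros x y. unfold S. destruct (constructive_indefinite_description _ _) as [v Hv]. simpl. apply Hv. }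
  rewrite (adj_char T S AS). exact AS.
Qed.

Lemma iso_adj_left {H : Hilbert} (T : H -> H) : is_isometry T -> forall x, adj T (T x) = x.
Proof.
  intros I x. apply hext_r. intro w. rewrite <- (iso_adj T I), (iso_inner T I). reflexivity.
Qed.

Lemma adj_Nsq {H : Hilbert} (T : H -> H) : is_isometry T -> forall y, Nsq (adj T y) <= Nsq y.
Proof.
  intros I y. pose proof (reCS (T (adj T y)) y) as CS.
  rewrite (iso_Nsq T I) in CS.
  assert (E : Cre (hinner (T (adj T y)) y) = Nsq (adj T y)) by (unfold Nsq; rewrite (iso_adj T I); reflexivity).
  rewrite E in CS. pose proof (Nsq_pos (adj T y)). pose proof (Nsq_pos y).
  destruct (Rle_lt_or_eq_dec 0 (Nsq (adj T y)) H0) as [Hp|Hp]; [|lra].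
  apply (Rmult_le_reg_l (Nsq (adj T y))); nra.
Qed.

Lemma adj_hnorm {H : Hilbert} (T : H -> H) : is_isometry T -> forall y, hnorm (adj T y) <= hnorm y.
Proof. intros I y. unfold hnorm. apply sqrt_le_1_alt. apply (adj_Nsq T I). Qed.

Arguments gmul_assoc {_} _ _ _.
Arguments gmul_1l {_} _.
Arguments gmul_1r {_} _.
Arguments gmul_Vl {_} _.
Arguments gmul_Vr {_} _.
Arguments gopen_full {_}.
Arguments gopen_inter {_} _ _ _ _.
Arguments gopen_union {_} _ _.
Arguments gmul_cont {_} _ _ _ _ _.

Lemma ginv_uniq {G : LCGroup} (a b : G) : gmul a b = gone -> a = ginv b.
Proof.
  intro E. rewrite <- (gmul_1r a), <- (gmul_Vr b), gmul_assoc, E. apply gmul_1l.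
Qed.

Lemma ginv_mul {G : LCGroup} (x y : G) : ginv (gmul x y) = gmul (ginv y) (ginv x).
Proof.
  symmetry. apply ginv_uniq. rewrite gmul_assoc, <- (gmul_assoc (ginv y)), gmul_Vl, gmul_1r, gmul_Vl.
  reflexivity.
Qed.

Lemma ginv_inv {G : LCGroup} (x : G) : ginv (ginv x) = x.
Proof. symmetry. apply ginv_uniq. apply gmul_Vr. Qed.

Lemma gcanc1 {G : LCGroup} (x y : G) : gmul (gmul x y) (ginv y) = x.
Proof. rewrite <- gmul_assoc, gmul_Vr. apply gmul_1r. Qed.
Lemma gcanc2 {G : LCGroup} (x y : G) : gmul (gmul x (ginv y)) y = x.
Proof. rewrite <- gmul_assoc, gmul_Vl. apply gmul_1r. Qed.

Ltac gsimpl := repeat (rewrite ?ginv_mul, ?ginv_inv, ?gmul_assoc, ?gcanc1, ?gcanc2, ?gmul_Vr, ?gmul_Vl, ?gmul_1l, ?gmul_1r).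

Lemma ore {G : LCGroup} (P : G -> Prop) : standing_assumptions G P ->
  forall b d, P b -> P d -> exists s t, P s /\ P t /\ gmul b s = gmul d t.
Proof.
  intros [_ [_ [_ [Dec _]]]] b d Pb Pd. destruct (Dec (gmul (ginv b) d)) as [s [t [Ps [Pt E]]]].
  exists s, t. split; [exact Ps|split; [exact Pt|]].
  assert (E2 : gmul d t = gmul (gmul b (gmul (ginv b) d)) t).
  { gsimpl. reflexivity. }
  rewrite E2, E. gsimpl. reflexivity.
Qed.


Lemma rep_iso {G : LCGroup} {H : Hilbert} (P : G -> Prop) (V : G -> H -> H) :
  isom_rep_crp P V -> forall a, P a -> is_isometry (V a).
Proof. intros [_ [_ [I _]]]; exact I. Qed.

Lemma rep_adj {G : LCGroup} {H : Hilbert} (P : G -> Prop) (V : G -> H -> H) :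
  isom_rep_crp P V -> forall a, P a -> is_adjoint (V a) (adj (V a)).
Proof. intros R a Pa. apply iso_adj. apply (rep_iso P V R a Pa). Qed.

Lemma F1 {G : LCGroup} {H : Hilbert} (P : G -> Prop) (V : G -> H -> H) :
  isom_rep_crp P V -> forall a x, P a -> adj (V a) (V a x) = x.
Proof. intros R a x Pa. apply iso_adj_left. apply (rep_iso P V R a Pa). Qed.

Lemma F2 {G : LCGroup} {H : Hilbert} (P : G -> Prop) (V : G -> H -> H) :
  isom_rep_crp P V -> forall a b x, P a -> P b -> V a (V b x) = V (gmul b a) x.
Proof.
  intros [_ [_ [_ [M _]]]] a b x Pa Pb. rewrite <- (M a b Pa Pb). reflexivity.
Qed.

Lemma F3 {G : LCGroup} {H : Hilbert} (P : G -> Prop) (V : G -> H -> H) :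
  isom_rep_crp P V -> forall a b x, P a -> P b -> adj (V (gmul b a)) x = adj (V b) (adj (V a) x).
Proof.
  intros R a b x Pa Pb. pose proof R as [s1 [s2 [I [M Cm]]]].
  rewrite <- (M a b Pa Pb).
  rewrite (adj_char _ (ocomp (adj (V b)) (adj (V a)))). reflexivity.
  apply adj_comp; apply (rep_adj P V R); assumption.
Qed.

Lemma F4 {G : LCGroup} {H : Hilbert} (P : G -> Prop) (V : G -> H -> H) :
  isom_rep_crp P V -> forall a b x, P a -> P b ->
  V a (adj (V a) (V b (adj (V b) x))) = V b (adj (V b) (V a (adj (V a) x))).
Proof.
  intros [_ [_ [_ [_ Cm]]]] a b x Pa Pb. pose proof (Cm a b Pa Pb) as E.
  exact (f_equal (fun f => f x) E).
Qed.

Lemma indep {G : LCGroup} {H : Hilbert} (P : G -> Prop) (V : G -> H -> H) :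
  standing_assumptions G P -> isom_rep_crp P V ->
  forall a b c d, P a -> P b -> P c -> P d ->
      gmul a (ginv b) = gmul c (ginv d) ->
      ocomp (adj (V b)) (V a) = ocomp (adj (V d)) (V c).
Proof.
  intros SA R a b c d Pa Pb Pc Pd E.
  destruct (ore P SA b d Pb Pd) as [s [t [Ps [Pt Est]]]].
  assert (Eas : gmul a s = gmul c t).
  { transitivity (gmul (gmul a (ginv b)) (gmul b s)). gsimpl; reflexivity.
    rewrite E, Est. gsimpl; reflexivity. }
  apply functional_extensionality. intro x. unfold ocomp.
  rewrite <- (F1 P V R s (V a x) Ps), <- (F3 P V R s b _ Ps Pb), (F2 P V R s a _ Ps Pa).
  rewrite <- (F1 P V R t (V c x) Pt), <- (F3 P V R t d _ Pt Pd), (F2 P V R t c _ Pt Pc).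
  rewrite Est, Eas. reflexivity.
Qed.

Lemma Wop_eq {G : LCGroup} {H : Hilbert} (P : G -> Prop) (V : G -> H -> H) :
  standing_assumptions G P -> isom_rep_crp P V ->
  forall g a b, P a -> P b -> g = gmul a (ginv b) -> Wop P V g = ocomp (adj (V b)) (V a).
Proof.
  intros SA R g a b Pa Pb E. unfold Wop.
  set (ab := epsilon _ _).
  assert (Hab : P (fst ab) /\ P (snd ab) /\ g = gmul (fst ab) (ginv (snd ab))).
  { apply epsilon_spec. exists (a, b). simpl. auto. }
  destruct Hab as [P1 [P2 E2]].
  apply (indep P V SA R); auto. rewrite <- E2, <- E. reflexivity.
Qed.

Lemma Eop_eq {G : LCGroup} {H : Hilbert} (P : G -> Prop) (V : G -> H -> H) :
  standing_assumptions G P -> isom_rep_crp P V ->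
  forall g a b x, P a -> P b -> g = gmul a (ginv b) ->
  Eop P V g x = adj (V b) (V a (adj (V a) (V b x))).
Proof.
  intros SA R g a b x Pa Pb E. unfold Eop, rangeproj.
  rewrite (Wop_eq P V SA R g a b Pa Pb E).
  rewrite (adj_char (ocomp (adj (V b)) (V a)) (ocomp (adj (V a)) (V b))). reflexivity.
  apply adj_comp. apply adj_sym. apply (rep_adj P V R b Pb). apply (rep_adj P V R a Pa).
Qed.

Lemma part_iso {G : LCGroup} {H : Hilbert} (P : G -> Prop) (V : G -> H -> H) :
  standing_assumptions G P -> isom_rep_crp P V -> forall g, is_partial_isometry (Wop P V g).
Proof.
  intros SA R g. pose proof SA as [_ [_ [_ [Dec _]]]].
  destruct (Dec g) as [a [b [Pa [Pb Eg]]]].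
  rewrite (Wop_eq P V SA R g a b Pa Pb Eg).
  pose proof (rep_iso P V R a Pa) as Ia. pose proof (rep_iso P V R b Pb) as Ib.
  pose proof (rep_adj P V R a Pa) as Aa. pose proof (rep_adj P V R b Pb) as Ab.
  pose proof Ia as [La Na].
  assert (BL : is_bounded_linear (ocomp (adj (V b)) (V a))).
  { split; [|split].
    - intros x y. unfold ocomp. rewrite (bl_add _ La), (adj_add _ _ Ab). reflexivity.
    - intros c x. unfold ocomp. rewrite (bl_scal _ La), (adj_scal _ _ Ab). reflexivity.
    - exists 1. intro x. unfold ocomp. rewrite Rmult_1_l. rewrite <- (Na x). apply (adj_hnorm _ Ib). }
  split; [exact BL|].
  intros x Hx. set (W := ocomp (adj (V b)) (V a)) in *.
  set (Q := adj (V a) (V b (W x))).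
  assert (WQ : W Q = W x).
  { unfold Q; unfold W; unfold ocomp. rewrite (F4 P V R a b _ Pa Pb), (F1 P V R a _ Pa), (F1 P V R b _ Pb). reflexivity. }
  assert (Hk : W (hadd x (hopp Q)) = h0).
  { destruct BL as [BA [BS _]]. rewrite BA, hopp_scal, BS, <- hopp_scal, WQ. apply hadd_opp. }
  specialize (Hx _ Hk). rewrite hinner_add_r, hopp_scal, hinner_scal_r in Hx.
  apply (f_equal Cre) in Hx. simpl in Hx.
  assert (EQ : Cre (hinner x Q) = Nsq (W x)).
  { unfold Q. rewrite <- Aa, Cre_conj_self, Ab. reflexivity. }
  unfold hnorm. f_equal. change (Nsq (W x) = Nsq x). unfold Nsq at 2. lra.
Qed.

Lemma Psemi {G : LCGroup} (P : G -> Prop) : standing_assumptions G P ->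
  forall a b, P a -> P b -> P (gmul a b).
Proof. intros [_ [_ [S _]]]; exact S. Qed.

Lemma E_comm {G : LCGroup} {H : Hilbert} (P : G -> Prop) (V : G -> H -> H) :
  standing_assumptions G P -> isom_rep_crp P V ->
  forall g h, ocomp (Eop P V g) (Eop P V h) = ocomp (Eop P V h) (Eop P V g).
Proof.
  intros SA R g h. pose proof SA as [_ [_ [_ [Dec _]]]].
  destruct (Dec g) as [a [b [Pa [Pb Eg]]]].
  destruct (Dec h) as [c [d [Pc [Pd Eh]]]].
  destruct (ore P SA b d Pb Pd) as [s [t [Ps [Pt Est]]]].
  pose proof (Psemi P SA) as PS.
  assert (Eg' : g = gmul (gmul a s) (ginv (gmul b s))) by (rewrite Eg; gsimpl; reflexivity).
  assert (Eh' : h = gmul (gmul c t) (ginv (gmul b s))) by (rewrite Eh, Est; gsimpl; reflexivity).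
  apply functional_extensionality. intro x. unfold ocomp.
  rewrite !(Eop_eq P V SA R g _ _ _ (PS _ _ Pa Ps) (PS _ _ Pb Ps) Eg').
  rewrite !(Eop_eq P V SA R h _ _ _ (PS _ _ Pc Pt) (PS _ _ Pb Ps) Eh').
  set (A := gmul a s) in *. set (B := gmul b s) in *. set (C := gmul c t) in *.
  assert (PA : P A) by apply (PS _ _ Pa Ps). assert (PB : P B) by apply (PS _ _ Pb Ps).
  assert (PC : P C) by apply (PS _ _ Pc Pt).
  f_equal.
  rewrite (F4 P V R A B _ PA PB), (F4 P V R A C _ PA PC), (F4 P V R B C _ PB PC). reflexivity.
Qed.

Lemma E_mono {G : LCGroup} {H : Hilbert} (P : G -> Prop) (V : G -> H -> H) :
  standing_assumptions G P -> isom_rep_crp P V ->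
  forall g1 g2, P (gmul g1 (ginv g2)) -> op_le (Eop P V g1) (Eop P V g2).
Proof.
  intros SA R g1 g2 Pp x. pose proof SA as [_ [_ [_ [Dec _]]]].
  destruct (Dec g2) as [a [b [Pa [Pb Eg]]]].
  set (p := gmul g1 (ginv g2)) in *.
  assert (E1 : g1 = gmul (gmul p a) (ginv b)) by (unfold p; rewrite Eg; gsimpl; reflexivity).
  pose proof (Psemi P SA) as PS.
  rewrite (Eop_eq P V SA R g1 _ _ x (PS _ _ Pp Pa) Pb E1).
  rewrite (Eop_eq P V SA R g2 _ _ x Pa Pb Eg).
  rewrite <- (F2 P V R a p _ Pa Pp), (F3 P V R a p _ Pa Pp).
  pose proof (adj_sym _ _ (rep_adj P V R b Pb)) as Sb.
  rewrite !Sb, !(rep_adj P V R a Pa), (rep_adj P V R p Pp).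
  set (w := adj (V a) (V b x)).
  pose proof (adj_Nsq _ (rep_iso P V R p Pp) w). unfold Nsq in H0. exact H0.
Qed.

Lemma W_cont {G : LCGroup} {H : Hilbert} (P : G -> Prop) (V : G -> H -> H) :
  standing_assumptions G P -> isom_rep_crp P V ->
  strongly_continuous_on (fun _ => True) (Wop P V).
Proof.
  intros SA R x g _ eps Heps. pose proof SA as [_ [P1 [_ [Dec Dens]]]].
  pose proof (Psemi P SA) as PS.
  destruct (Dec g) as [a [b [Pa [Pb Eg]]]].
  destruct (Dens gone P1 (fun _ => True) gopen_full I) as [y0 [_ [O [HO [Oy0 OP]]]]].
  set (a' := gmul a y0). set (b' := gmul b y0).
  assert (Pa' : P a') by (apply PS; auto). assert (Pb' : P b') by (apply PS; auto).
  assert (Eg' : g = gmul a' (ginv b')) by (unfold a', b'; rewrite Eg; gsimpl; reflexivity).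
  pose proof R as [SCV _].
  destruct (SCV x a' Pa' eps Heps) as [U1 [HU1 [U1a HU1c]]].
  destruct (gmul_cont O (ginv a) a' HO) as [A [B [HA [HB [Aa [Ba HAB]]]]]].
  { unfold a'. gsimpl. exact Oy0. }
  set (Wn := fun z => B z /\ U1 z).
  assert (HWn : gopen Wn) by (apply gopen_inter; assumption).
  assert (Wsub : forall z, Wn z -> P z /\ U1 z).
  { intros z [Bz U1z]. split; [|exact U1z].
    replace z with (gmul a (gmul (ginv a) z)) by (gsimpl; reflexivity).
    apply PS. exact Pa. apply OP. apply HAB; assumption. }
  set (F := fun A' : G -> Prop => gopen A' /\ forall k, A' k -> Wn (gmul k b')).
  exists (fun h => exists A', F A' /\ A' h). split; [|split].
  - apply gopen_union. intros U [HU _]. exact HU.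
  - destruct (gmul_cont Wn g b' HWn) as [A2 [B2 [HA2 [HB2 [A2g [B2b H2]]]]]].
    { rewrite Eg'. gsimpl. split. exact Ba. exact U1a. }
    exists A2. split; [split|]; auto.
  - intros h _ [A' [[_ HA'] A'h]]. destruct (Wsub _ (HA' h A'h)) as [Phb U1hb].
    assert (Eh : h = gmul (gmul h b') (ginv b')) by (gsimpl; reflexivity).
    rewrite (Wop_eq P V SA R h _ _ Phb Pb' Eh), (Wop_eq P V SA R g _ _ Pa' Pb' Eg').
    unfold ocomp, hsub. pose proof (rep_adj P V R b' Pb') as Ab.
    rewrite <- (adj_opp _ _ Ab), <- (adj_add _ _ Ab).
    eapply Rle_lt_trans. apply (adj_hnorm _ (rep_iso P V R b' Pb')).
    apply HU1c; assumption.
Qed.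

Lemma W_mult {G : LCGroup} {H : Hilbert} (P : G -> Prop) (V : G -> H -> H) :
  standing_assumptions G P -> isom_rep_crp P V ->
  forall g h, ocomp (Wop P V g) (Wop P V h) = ocomp (Eop P V g) (Wop P V (gmul h g)).
Proof.
  intros SA R g h. pose proof SA as [_ [_ [_ [Dec _]]]].
  pose proof (Psemi P SA) as PS.
  destruct (Dec g) as [a [b [Pa [Pb Eg]]]].
  destruct (Dec h) as [c [d [Pc [Pd Eh]]]].
  destruct (ore P SA a d Pa Pd) as [s [t [Ps [Pt Est]]]].
  set (A := gmul a s). set (B := gmul b s). set (C := gmul c t).
  assert (PA : P A) by apply (PS _ _ Pa Ps). assert (PB : P B) by apply (PS _ _ Pb Ps).
  assert (PC : P C) by apply (PS _ _ Pc Pt).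
  assert (Eg' : g = gmul A (ginv B)) by (unfold A, B; rewrite Eg; gsimpl; reflexivity).
  assert (Eh' : h = gmul C (ginv A)) by (unfold A, C; rewrite Eh, Est; gsimpl; reflexivity).
  assert (Ehg : gmul h g = gmul C (ginv B)) by (rewrite Eh', Eg'; gsimpl; reflexivity).
  apply functional_extensionality. intro x.
  rewrite (Wop_eq P V SA R g _ _ PA PB Eg'), (Wop_eq P V SA R h _ _ PC PA Eh'),
          (Wop_eq P V SA R _ _ _ PC PB Ehg).
  unfold ocomp. rewrite (Eop_eq P V SA R g _ _ _ PA PB Eg').
  rewrite (F4 P V R A B _ PA PB), (F1 P V R B _ PB). reflexivity.
Qed.

Theorem mainTheorem1 (G : LCGroup) (P : G -> Prop) (H : Hilbert) (V : G -> H -> H) :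
  standing_assumptions G P ->
  isom_rep_crp P V ->
  (* (1) independence of the decomposition, and partial isometry *)
  ((forall a b c d, P a -> P b -> P c -> P d ->
      gmul a (ginv b) = gmul c (ginv d) ->
      ocomp (adj (V b)) (V a) = ocomp (adj (V d)) (V c)) /\
   (forall g, is_partial_isometry (Wop P V g))) /\
  (* (2) the E_g pairwise commute *)
  (forall g h, ocomp (Eop P V g) (Eop P V h) = ocomp (Eop P V h) (Eop P V g)) /\
  (* (3) monotonicity *)
  (forall g1 g2, P (gmul g1 (ginv g2)) -> op_le (Eop P V g1) (Eop P V g2)) /\
  (* (4) strong continuity on G *)
  strongly_continuous_on (fun _ => True) (Wop P V) /\
  (* (5) W_g W_h = E_g W_{hg} *)
  (forall g h, ocomp (Wop P V g) (Wop P V h) = ocomp (Eop P V g) (Wop P V (gmul h g))).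
Proof.
  intros SA R.
  split; [split|split; [|split; [|split]]].
  - exact (indep P V SA R).
  - exact (part_iso P V SA R).
  - exact (E_comm P V SA R).
  - exact (E_mono P V SA R).
  - exact (W_cont P V SA R).
  - exact (W_mult P V SA R).
Qed.
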